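(* There is a constant $c$ such that for all binary strings $x,y$, $\mathrm{KP}(x\mid y)\le \min\{\mathrm{KP}(q) : [q](y)=x\}+c$. However, the difference $\min\{\mathrm{KP}(q) : [q](y)=x\}-\mathrm{KP}(x\mid y)$ is unbounded (over all pairs $x,y$).
   Context: A computable partial function $U(p,x)$ is prefix-free (in $p$) if for every $x$ the set of $p$ with $U(p,x)$ defined contains no string together with a proper prefix of it. $\mathrm{KP}(y\mid x)=\min\{|p|: U(p,x)=y\}$ for a prefix-free $U$ that is optimal (minimal up to an additive constant among prefix-free computable partial functions); the unconditional prefix complexity $\mathrm{KP}(q)$ is defined analogously with machines without a second argument. $[q](x)$ denotes the output of program $q$ on input $x$ in a fixed programming language (a computable numbering of all computable partial functions of one string argument with the $s$-$m$-$n$/Gödel property, i.e. programs in any other such language can be computably translated into it). *)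

(* Defs.v *)
From mathcomp Require Import all_boot.
From Stdlib Require Import ClassicalEpsilon.
Set Implicit Arguments. Unset Strict Implicit. Unset Printing Implicit Defensive.

(* Model of computation: register (Minsky) machines on nat.            *)
Inductive instr := INC of nat | DEC of nat & nat.

Definition regs := nat -> nat.
Definition upd (s : regs) (r v : nat) : regs := fun i => if i == r then v else s i.

Fixpoint run (P : seq instr) (fuel pc : nat) (s : regs) : option nat :=
  match fuel with
  | 0 => None
  | k.+1 =>
    if size P <= pc then Some (s 0)
    else match nth (INC 0) P pc with
         | INC r => run P k pc.+1 (upd s r (s r).+1)
         | DEC r j => if s r == 0 then run P k j s
                      else run P k pc.+1 (upd s r (s r).-1)
         end
  end.

Definition init (n : nat) : regs := fun i => if i == 0 then n else 0.

Definition halts_with (P : seq instr) (n m : nat) : Prop :=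
  exists fuel, run P fuel 0 (init n) = Some m.

(* bijective encoding of binary strings by naturals *)
Fixpoint enc (s : seq bool) : nat :=
  match s with
  | [::] => 0
  | b :: s' => (enc s').*2 + (if b then 2 else 1)
  end.

(* Cantor pairing nat * nat -> nat (a bijection) *)
Definition pairn (a b : nat) : nat := ((a + b) * (a + b).+1)./2 + b.

Definition computable1 (f : seq bool -> option (seq bool)) : Prop :=
  exists P, forall x y, f x = Some y <-> halts_with P (enc x) (enc y).

Definition computable2 (f : seq bool -> seq bool -> option (seq bool)) : Prop :=
  exists P, forall p x y,
    f p x = Some y <-> halts_with P (pairn (enc p) (enc x)) (enc y).

Definition prefix_free2 (U : seq bool -> seq bool -> option (seq bool)) : Prop :=
  forall x p p', U p x <> None -> U p' x <> None -> prefix p p' -> p = p'.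

Definition prefix_free1 (V : seq bool -> option (seq bool)) : Prop :=
  forall p p', V p <> None -> V p' <> None -> prefix p p' -> p = p'.

(* optimality: minimal up to an additive constant among prefix-free
   computable partial functions (KP_U <= KP_U' + c, written out) *)
Definition optimal2 (U : seq bool -> seq bool -> option (seq bool)) : Prop :=
  [/\ computable2 U, prefix_free2 U &
   forall U', computable2 U' -> prefix_free2 U' ->
     exists c, forall p' x y, U' p' x = Some y ->
       exists p, U p x = Some y /\ size p <= size p' + c].

Definition optimal1 (V : seq bool -> option (seq bool)) : Prop :=
  [/\ computable1 V, prefix_free1 V &
   forall V', computable1 V' -> prefix_free1 V' ->
     exists c, forall p' y, V' p' = Some y ->
       exists p, V p = Some y /\ size p <= size p' + c].

(* programming language [q](x): a computable numbering of computable partial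
   functions with the Goedel (s-m-n / acceptability) property: every other
   computable numbering computably translates into it *)
Definition goedel_numbering (num : seq bool -> seq bool -> option (seq bool)) : Prop :=
  computable2 num /\
  forall num', computable2 num' ->
    exists t : seq bool -> seq bool,
      computable1 (fun q => Some (t q)) /\ forall q x, num (t q) x = num' q x.

(* classical minimum of a set of naturals (meaningful when nonempty) *)
Definition minP (P : nat -> Prop) : nat :=
  epsilon (inhabits 0) (fun n => P n /\ forall m, P m -> n <= m).

Definition KPc (U : seq bool -> seq bool -> option (seq bool)) (x y : seq bool) : nat :=
  minP (fun n => exists p, size p = n /\ U p y = Some x).

Definition KPu (V : seq bool -> option (seq bool)) (q : seq bool) : nat :=
  minP (fun n => exists r, size r = n /\ V r = Some q).

Definition KPprog (V : seq bool -> option (seq bool))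
    (num : seq bool -> seq bool -> option (seq bool)) (x y : seq bool) : nat :=
  minP (fun n => exists q, num q y = Some x /\ KPu V q = n).

(* Main.v *)
Require Import Defs.
From Stdlib Require Import ClassicalEpsilon Classical FunctionalExtensionality.
From mathcomp Require Import all_boot zify.
Set Implicit Arguments. Unset Strict Implicit. Unset Printing Implicit Defensive.

Definition conf := (nat * regs)%type.
Definition step (Q : seq instr) (c : conf) : conf :=
  let: (pc, s) := c in
  if size Q <= pc then (pc, s) else
  match nth (INC 0) Q pc with
  | INC r => (pc.+1, upd s r (s r).+1)
  | DEC r j => if s r == 0 then (j, s) else (pc.+1, upd s r (s r).-1)
  end.
Arguments step : simpl never.
Definition halted (Q : seq instr) (c : conf) := size Q <= c.1.

Lemma run_step Q f pc s : run Q f.+1 pc s =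
  if size Q <= pc then Some (s 0) else let: (pc', s') := step Q (pc, s) in run Q f pc' s'.
Proof.
rewrite /= /step; case: ifP => // _.
by case: nth => [r|r j] //; case: ifP.
Qed.

Lemma halted_fix Q c : halted Q c -> step Q c = c.
Proof. by case: c => pc s; rewrite /halted /step /= => ->. Qed.

Lemma iter_halted Q c k : halted Q c -> iter k (step Q) c = c.
Proof. by move=> h; elim: k => //= k ->; rewrite halted_fix. Qed.

Lemma halted_mono Q c k k' : k <= k' -> halted Q (iter k (step Q) c) ->
  iter k' (step Q) c = iter k (step Q) c.
Proof.
move=> le h; rewrite -(subnK le) iterD; exact: iter_halted.
Qed.

Lemma run_iff Q pc s m : (exists f, run Q f pc s = Some m) <->
  exists k, halted Q (iter k (step Q) (pc, s)) /\ (iter k (step Q) (pc, s)).2 0 = m.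
Proof.
split.
- case=> f; elim: f pc s => [//|f IH] pc s.
  rewrite run_step; case: ifP => h.
    by case=> <-; exists 0.
  case E: (step Q (pc, s)) => [pc' s'] /IH [k [h1 h2]].
  by exists k.+1; rewrite iterSr E.
- case=> k; elim: k pc s => [|k IH] pc s.
    by case=> [h <-]; exists 1; rewrite run_step; move: h; rewrite /halted /= => ->.
  case h: (size Q <= pc).
    rewrite iter_halted; last by [].
    case=> _ <-.
    by exists 1; rewrite run_step h.
  rewrite iterSr.
  case E: (step Q (pc, s)) => [pc' s'] /IH [f hf].
  by exists f.+1; rewrite run_step h E.
Qed.

Inductive cmd := CInc of nat | CDec of nat | CSeq of cmd & cmd | CWhile of nat & cmd
  | CIf of nat & cmd & cmd | CCall of seq instr & nat & nat.

Definition Z := 1.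

Fixpoint len c := match c with CInc _ => 1 | CDec _ => 1 | CSeq c1 c2 => len c1 + len c2
  | CWhile _ c => (len c).+2 | CIf _ c1 c2 => (len c1 + len c2).+2 | CCall P _ _ => size P end.

Definition reloc o n m k (i : instr) := match i with
  INC r => INC (m*r+k) | DEC r j => DEC (m*r+k) (o + minn j n) end.

Fixpoint compile c o := match c with
 | CInc r => [:: INC r]
 | CDec r => [:: DEC r o.+1]
 | CSeq c1 c2 => compile c1 o ++ compile c2 (o + len c1)
 | CWhile r c => DEC r (o + (len c).+2) :: compile c o.+1 ++ [:: DEC Z o]
 | CIf r c1 c2 => DEC r (o + (len c2).+2) :: compile c2 o.+1 ++
        DEC Z (o + (len c1 + len c2).+2) :: compile c1 (o + (len c2).+2)
 | CCall P m k => map (reloc o (size P) m k) P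
 end.

Lemma size_compile c o : size (compile c o) = len c.
Proof.
elim: c o => //= [c1 IH1 c2 IH2|r c IH|r c1 IH1 c2 IH2|P m k] o.
- by rewrite size_cat IH1 IH2.
- by rewrite size_cat IH addn1.
- by rewrite size_cat /= IH1 IH2; lia.
- by rewrite size_map.
Qed.

Definition emb m k (s u : regs) : regs := fun j =>
  if (k <= j) && ((j - k) %% m == 0) then u ((j - k) %/ m) else s j.
Definition BHalts P (s u : regs) := exists n,
  halted P (iter n (step P) (0, s)) /\ (iter n (step P) (0, s)).2 = u.

Inductive Sem : cmd -> regs -> regs -> Prop :=
| SInc r s : Sem (CInc r) s (upd s r (s r).+1)
| SDec r s : Sem (CDec r) s (upd s r (s r).-1)
| SSeq c1 c2 s u t : Sem c1 s u -> Sem c2 u t -> Sem (CSeq c1 c2) s t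
| SWhile0 r c s : s r = 0 -> Sem (CWhile r c) s s
| SWhileS r c s u t : s r <> 0 -> Sem c (upd s r (s r).-1) u ->
    Sem (CWhile r c) u t -> Sem (CWhile r c) s t
| SIf0 r c1 c2 s t : s r = 0 -> Sem c1 s t -> Sem (CIf r c1 c2) s t
| SIfS r c1 c2 s t : s r <> 0 -> Sem c2 (upd s r (s r).-1) t -> Sem (CIf r c1 c2) s t
| SCall P m k s u : BHalts P (fun i => s (m * i + k)) u -> Sem (CCall P m k) s (emb m k s u).

Fixpoint wf c := match c with
 | CInc r => r != Z | CDec r => r != Z | CSeq c1 c2 => wf c1 && wf c2
 | CWhile r c => (r != Z) && wf c | CIf r c1 c2 => [&& r != Z, wf c1 & wf c2]
 | CCall _ m k => (0 < m) && (Z < k) end.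

Lemma upd_eq s r v : upd s r v r = v.
Proof. by rewrite /upd eqxx. Qed.
Lemma upd_neq s r v i : i != r -> upd s r v i = s i.
Proof. by rewrite /upd => /negbTE ->. Qed.
Lemma upd_id s r v : s r = v -> upd s r v = s.
Proof. move=> h; apply: functional_extensionality => i; rewrite /upd; by case: eqP => // ->. Qed.

Lemma Sem_Z c s t : Sem c s t -> wf c -> t Z = s Z.
Proof.
elim=> //=.
- by move=> r s0 h; rewrite upd_neq // eq_sym.
- by move=> r s0 h; rewrite upd_neq // eq_sym.
- by move=> c1 c2 s0 u t0 _ IH1 _ IH2 /andP[h1 h2]; rewrite IH2 // IH1.
- move=> r c0 s0 u t0 _ _ IH1 _ IH2 /andP[h1 h2].
  by rewrite IH2 /= ?h1 ?h2 // IH1 // upd_neq // eq_sym.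
- by move=> r c1 c2 s0 t0 _ _ IH /and3P[h1 h2 h3]; rewrite IH.
- by move=> r c1 c2 s0 t0 _ _ IH /and3P[h1 h2 h3]; rewrite IH // upd_neq // eq_sym.
- move=> P m k s0 u _ /andP[h1 h2]; rewrite /emb.
  by have -> : (k <= Z) = false by apply/negbTE; rewrite -ltnNge.
Qed.

Definition placed Q o c := forall i, i < len c ->
  nth (INC 0) Q (o + i) = nth (INC 0) (compile c o) i.

Lemma placed_seq1 Q o c1 c2 : placed Q o (CSeq c1 c2) -> placed Q o c1.
Proof.
move=> h i hi; rewrite h /=; last by lia.
by rewrite nth_cat size_compile hi.
Qed.
Lemma placed_seq2 Q o c1 c2 : placed Q o (CSeq c1 c2) -> placed Q (o + len c1) c2.
Proof.
move=> h i hi; rewrite -addnA h /=; last by lia.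
by rewrite nth_cat size_compile ltnNge leq_addr /= addKn.
Qed.
Lemma placed_while_hd Q o r c : placed Q o (CWhile r c) -> nth (INC 0) Q o = DEC r (o + (len c).+2).
Proof. by move=> h; move: (h 0 isT); rewrite addn0. Qed.
Lemma placed_while_body Q o r c : placed Q o (CWhile r c) -> placed Q o.+1 c.
Proof.
move=> h i hi; rewrite addSnnS h /=; last by lia.
by rewrite nth_cat size_compile hi.
Qed.
Lemma placed_while_tl Q o r c : placed Q o (CWhile r c) -> nth (INC 0) Q (o.+1 + len c) = DEC Z o.
Proof.
move=> h; rewrite addSnnS h /=; last by lia.
by rewrite nth_cat size_compile ltnn subnn.
Qed.
Lemma placed_if_hd Q o r c1 c2 : placed Q o (CIf r c1 c2) -> nth (INC 0) Q o = DEC r (o + (len c2).+2).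
Proof. by move=> h; move: (h 0 isT); rewrite addn0. Qed.
Lemma placed_if2 Q o r c1 c2 : placed Q o (CIf r c1 c2) -> placed Q o.+1 c2.
Proof.
move=> h i hi; rewrite addSnnS h /=; last by lia.
by rewrite nth_cat size_compile hi.
Qed.
Lemma placed_if_mid Q o r c1 c2 : placed Q o (CIf r c1 c2) ->
  nth (INC 0) Q (o.+1 + len c2) = DEC Z (o + (len c1 + len c2).+2).
Proof.
move=> h; rewrite addSnnS h /=; last by lia.
by rewrite nth_cat size_compile ltnn subnn.
Qed.
Lemma placed_if1 Q o r c1 c2 : placed Q o (CIf r c1 c2) -> placed Q (o + (len c2).+2) c1.
Proof.
move=> h i hi; rewrite -addnA h /=; last by lia.
rewrite nth_cat size_compile ltnNge.
have -> : len c2 <= (len c2).+1 + i by lia.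
by rewrite /= (_ : (len c2).+1 + i - len c2 = i.+1) //; lia.
Qed.

Lemma step_inc Q pc s r : pc < size Q -> nth (INC 0) Q pc = INC r ->
  step Q (pc, s) = (pc.+1, upd s r (s r).+1).
Proof. by rewrite /step ltnNge => /negbTE -> ->. Qed.
Lemma step_dec Q pc s r j : pc < size Q -> nth (INC 0) Q pc = DEC r j ->
  step Q (pc, s) = if s r == 0 then (j, s) else (pc.+1, upd s r (s r).-1).
Proof. by rewrite /step ltnNge => /negbTE -> ->. Qed.

Lemma emb_at m k s u r : 0 < m -> emb m k s u (m * r + k) = u r.
Proof.
move=> m0; rewrite /emb leq_addl addnK modnMr eqxx /=.
by rewrite mulKn.
Qed.

Lemma emb_reg m k j : 0 < m -> (k <= j) && ((j - k) %% m == 0) -> j = m * ((j - k) %/ m) + k.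
Proof.
move=> m0 /andP[h1 /eqP h2].
by rewrite mulnC -[(j - k) %/ m * m]addn0 -h2 -divn_eq subnK.
Qed.

Lemma emb_upd m k s u r v : 0 < m ->
  upd (emb m k s u) (m * r + k) v = emb m k s (upd u r v).
Proof.
move=> m0; apply: functional_extensionality => j.
rewrite /upd /emb; case: eqP => [->|ne].
  by rewrite leq_addl addnK modnMr eqxx /= mulKn // eqxx.
case: ifP => // h; case: eqP => // e; exfalso; apply: ne.
by rewrite {1}(emb_reg m0 h) e.
Qed.

Lemma emb_self m k s : 0 < m -> emb m k s (fun i => s (m * i + k)) = s.
Proof.
move=> m0; apply: functional_extensionality => j; rewrite /emb.
by case: ifP => // h; rewrite -(emb_reg m0 h).
Qed.

Section Lock.
Variables (Q P : seq instr) (o m k : nat) (s : regs).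
Hypothesis m0 : 0 < m.
Hypothesis pl : placed Q o (CCall P m k).
Hypothesis sz : o + size P <= size Q.

Lemma lock_step pc u : pc < size P ->
  step Q (o + pc, emb m k s u) =
  (o + minn (step P (pc, u)).1 (size P), emb m k s (step P (pc, u)).2).
Proof.
move=> hpc.
have hQ : o + pc < size Q by lia.
have hn : nth (INC 0) Q (o + pc) = reloc o (size P) m k (nth (INC 0) P pc).
  by rewrite pl //= (nth_map (INC 0)).
rewrite /step.
have -> : (size Q <= o + pc) = false by apply/negbTE; rewrite -ltnNge.
have -> : (size P <= pc) = false by apply/negbTE; rewrite -ltnNge.
rewrite hn.
case: (nth (INC 0) P pc) => [r|r j] /=.
  rewrite emb_at // emb_upd //.
  have -> : minn pc.+1 (size P) = pc.+1 by apply/minn_idPl.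
  by rewrite addnS.
rewrite emb_at //; case: ifP => // _ /=.
rewrite emb_upd //.
have -> : minn pc.+1 (size P) = pc.+1 by apply/minn_idPl.
by rewrite addnS.
Qed.

Lemma lock u0 j : (forall i, i < j -> ~~ halted P (iter i (step P) (0, u0))) ->
  iter j (step Q) (o, emb m k s u0) =
  (o + minn (iter j (step P) (0, u0)).1 (size P), emb m k s (iter j (step P) (0, u0)).2).
Proof.
elim: j => [|j IH] h /=.
  by rewrite min0n addn0.
rewrite IH; last by move=> i hi; apply: h; lia.
have := h j (ltnSn j); rewrite /halted -ltnNge.
case: (iter j (step P) (0, u0)) => pc u /= hpc.
have -> : minn pc (size P) = pc by apply/minn_idPl; lia.
exact: lock_step.
Qed.

End Lock.

Lemma halted_exists_min P u0 : (exists n, halted P (iter n (step P) (0, u0))) ->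
  exists i0, halted P (iter i0 (step P) (0, u0)) /\
    forall i, i < i0 -> ~~ halted P (iter i (step P) (0, u0)).
Proof.
move=> ex; case: (ex_minnP ex) => i0 h hmin; exists i0; split => // i hi.
by apply/negP => /hmin; rewrite leqNgt hi.
Qed.

Lemma fwd Q c s t : Sem c s t -> forall o, wf c -> s Z = 0 -> placed Q o c ->
  o + len c <= size Q -> exists j, iter j (step Q) (o, s) = (o + len c, t).
Proof.
elim=> {c s t} /=.
- move=> r s o _ _ pl sz; exists 1 => /=.
  by rewrite (step_inc _ _ (r:=r)) ?addn1 //; [lia | move: (pl 0 isT); rewrite addn0].
- move=> r s o _ _ pl sz; exists 1 => /=.
  rewrite (step_dec _ _ (r:=r) (j:=o.+1)) ?addn1; [|lia|by move: (pl 0 isT); rewrite addn0].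
  by case: eqP => // e; rewrite upd_id // e.
- move=> c1 c2 s u t h1 IH1 h2 IH2 o /andP[w1 w2] z pl sz.
  have [j1 e1] := IH1 o w1 z (placed_seq1 pl) ltac:(lia).
  have z' : u Z = 0 by rewrite (Sem_Z h1 w1).
  have [j2 e2] := IH2 (o + len c1) w2 z' (placed_seq2 pl) ltac:(lia).
  by exists (j2 + j1); rewrite iterD e1 e2 addnA.
- move=> r c s hr o _ _ pl sz; exists 1 => /=.
  by rewrite (step_dec _ _ (placed_while_hd pl)) ?hr //; lia.
- move=> r c s u t hr hb IHb hw IHw o /andP[wr wc] z pl sz.
  have z1 : upd s r (s r).-1 Z = 0 by rewrite upd_neq // eq_sym.
  have [j1 e1] := IHb o.+1 wc z1 (placed_while_body pl) ltac:(lia).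
  have zu : u Z = 0 by rewrite (Sem_Z hb wc).
  have [j3 e3] := IHw o (introT andP (conj wr wc)) zu pl sz.
  exists (j3 + (1 + (j1 + 1))).
  rewrite !iterD /= (step_dec _ _ (placed_while_hd pl)); last by lia.
  have -> : (s r == 0) = false by apply/eqP.
  rewrite e1 (step_dec _ _ (placed_while_tl pl)); last by lia.
  by rewrite zu eqxx.
- move=> r c1 c2 s t hr h1 IH1 o /and3P[wr w1 w2] z pl sz.
  have [j1 e1] := IH1 (o + (len c2).+2) w1 z (placed_if1 pl) ltac:(lia).
  exists (j1 + 1); rewrite iterD /= (step_dec _ _ (placed_if_hd pl)); last by lia.
  by rewrite hr eqxx e1; congr pair; lia.
- move=> r c1 c2 s t hr h2 IH2 o /and3P[wr w1 w2] z pl sz.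
  have z1 : upd s r (s r).-1 Z = 0 by rewrite upd_neq // eq_sym.
  have [j2 e2] := IH2 o.+1 w2 z1 (placed_if2 pl) ltac:(lia).
  have zt : t Z = 0 by rewrite (Sem_Z h2 w2).
  exists (1 + (j2 + 1)); rewrite !iterD /= (step_dec _ _ (placed_if_hd pl)); last by lia.
  have -> : (s r == 0) = false by apply/eqP.
  rewrite e2 (step_dec _ _ (placed_if_mid pl)); last by lia.
  by rewrite zt eqxx.
- move=> P m k s u [n [hn en]] o /andP[m0 kz] z pl sz.
  have [i0 [hi0 hmin]] := halted_exists_min (ex_intro _ n hn).
  have li : i0 <= n by rewrite leqNgt; apply/negP => /hmin; rewrite hn.
  exists i0.
  have := @lock Q P o m k s m0 pl sz _ _ hmin; rewrite emb_self // => ->.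
  have -> : minn (iter i0 (step P) (0, fun i => s (m * i + k))).1 (size P) = size P.
    by apply/minn_idPr.
  by rewrite -en (halted_mono li hi0).
Qed.

Lemma halted_pos Q pc s k : pc < size Q -> halted Q (iter k (step Q) (pc, s)) ->
  exists k', k = k'.+1 /\ halted Q (iter k' (step Q) (step Q (pc, s))).
Proof.
case: k => [|k'] hpc.
  by rewrite /halted /= leqNgt hpc.
by rewrite iterSr => h; exists k'.
Qed.

Lemma halted_shift Q c c' j k : j <= k -> iter j (step Q) c = c' ->
  halted Q (iter k (step Q) c) -> halted Q (iter (k - j) (step Q) c').
Proof. by move=> le <-; rewrite -iterD subnK. Qed.

Lemma bwd Q c : forall o s k, wf c -> placed Q o c -> o + len c <= size Q -> s Z = 0 ->
  halted Q (iter k (step Q) (o, s)) ->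
  exists j t, j <= k /\ iter j (step Q) (o, s) = (o + len c, t) /\ Sem c s t.
Proof.
elim: c => /=.
- move=> r o s k _ pl sz z h.
  have [k' [-> _]] := halted_pos (ltac:(lia) : o < size Q) h.
  exists 1, (upd s r (s r).+1); split => //; split; last exact: SInc.
  by rewrite /= (step_inc _ _ (r:=r)) ?addn1 //; [lia | move: (pl 0 isT); rewrite addn0].
- move=> r o s k _ pl sz z h.
  have [k' [-> _]] := halted_pos (ltac:(lia) : o < size Q) h.
  exists 1, (upd s r (s r).-1); split => //; split; last exact: SDec.
  rewrite /= (step_dec _ _ (r:=r) (j:=o.+1)) ?addn1; [|lia|by move: (pl 0 isT); rewrite addn0].
  by case: eqP => // e; rewrite upd_id // e.
- move=> c1 IH1 c2 IH2 o s k /andP[w1 w2] pl sz z h.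
  have [j1 [u [l1 [e1 h1]]]] := IH1 o s k w1 (placed_seq1 pl) ltac:(lia) z h.
  have z' : u Z = 0 by rewrite (Sem_Z h1 w1).
  have h' := halted_shift l1 e1 h.
  have [j2 [t [l2 [e2 h2]]]] := IH2 (o + len c1) u (k - j1) w2 (placed_seq2 pl) ltac:(lia) z' h'.
  exists (j2 + j1), t; split; first by lia.
  by rewrite iterD e1 e2 addnA; split => //; apply: SSeq h1 h2.
- move=> r c IHc o s k /andP[wr wc] pl sz.
  elim/ltn_ind: k s => k IHk s z h.
  have [k' [ek h1]] := halted_pos (ltac:(lia) : o < size Q) h.
  move: h1; rewrite (step_dec _ _ (placed_while_hd pl)); last by lia.
  case: eqP => hr h1.
    exists 1, s; split; first by lia.
    split; last exact: SWhile0.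
    by rewrite /= (step_dec _ _ (placed_while_hd pl)) ?hr //; lia.
  have z1 : upd s r (s r).-1 Z = 0 by rewrite upd_neq // eq_sym.
  have [j1 [u [l1 [e1 hb]]]] := IHc o.+1 _ k' wc (placed_while_body pl) ltac:(lia) z1 h1.
  have zu : u Z = 0 by rewrite (Sem_Z hb wc).
  have h2 := halted_shift l1 e1 h1.
  have [k'' [ek' h3]] := halted_pos (ltac:(lia) : o.+1 + len c < size Q) h2.
  move: h3; rewrite (step_dec _ _ (placed_while_tl pl)); last by lia.
  rewrite zu eqxx => h3.
  have [j3 [t [l3 [e3 hw]]]] := IHk k'' ltac:(lia) u zu h3.
  exists (j3 + (1 + (j1 + 1))), t; split; first by lia.
  split; last by apply: SWhileS hb hw.
  rewrite !iterD /= (step_dec _ _ (placed_while_hd pl)); last by lia.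
  have -> : (s r == 0) = false by apply/eqP.
  rewrite e1 (step_dec _ _ (placed_while_tl pl)); last by lia.
  by rewrite zu eqxx.
- move=> r c1 IH1 c2 IH2 o s k /and3P[wr w1 w2] pl sz z h.
  have [k' [ek h1]] := halted_pos (ltac:(lia) : o < size Q) h.
  move: h1; rewrite (step_dec _ _ (placed_if_hd pl)); last by lia.
  case: eqP => hr h1.
    have [j1 [t [l1 [e1 hc]]]] := IH1 _ s k' w1 (placed_if1 pl) ltac:(lia) z h1.
    exists (j1 + 1), t; split; first by lia.
    split; last by apply: SIf0.
    rewrite iterD /= (step_dec _ _ (placed_if_hd pl)); last by lia.
    by rewrite hr eqxx e1; congr pair; lia.
  have z1 : upd s r (s r).-1 Z = 0 by rewrite upd_neq // eq_sym.
  have [j2 [u [l2 [e2 hc]]]] := IH2 o.+1 _ k' w2 (placed_if2 pl) ltac:(lia) z1 h1.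
  have zu : u Z = 0 by rewrite (Sem_Z hc w2).
  have h2 := halted_shift l2 e2 h1.
  have [k'' [ek' _]] := halted_pos (ltac:(lia) : o.+1 + len c2 < size Q) h2.
  exists (1 + (j2 + 1)), u; split; first by lia.
  split; last by apply: SIfS.
  rewrite !iterD /= (step_dec _ _ (placed_if_hd pl)); last by lia.
  have -> : (s r == 0) = false by apply/eqP.
  rewrite e2 (step_dec _ _ (placed_if_mid pl)); last by lia.
  by rewrite zu eqxx.
- move=> P m kk o s K /andP[m0 kz] pl sz z h.
  set u0 := fun i => s (m * i + kk).
  have contra : (forall i, i <= K -> ~~ halted P (iter i (step P) (0, u0))) -> False.
    move=> H.
    have := @lock Q P o m kk s m0 pl sz u0 K (fun i hi => H i (ltnW hi)).
    rewrite emb_self // => e; move: h; rewrite e /halted /=.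
    have := H K (leqnn K); rewrite /halted -ltnNge => hl.
    have -> : minn (iter K (step P) (0, u0)).1 (size P) = (iter K (step P) (0, u0)).1.
      by apply/minn_idPl; lia.
    lia.
  have ex : exists n, halted P (iter n (step P) (0, u0)).
    case: (classic (exists n, halted P (iter n (step P) (0, u0)))) => // nh.
    exfalso; apply: contra => i _; apply/negP => hi; apply: nh; by exists i.
  have [i0 [hi0 hmin]] := halted_exists_min ex.
  have li : i0 <= K.
    rewrite leqNgt; apply/negP => lt; apply: contra => i hi; apply: hmin; lia.
  exists i0, (emb m kk s (iter i0 (step P) (0, u0)).2); split => //.
  split.
    have := @lock Q P o m kk s m0 pl sz u0 i0 hmin; rewrite emb_self // => ->.
    by have -> : minn (iter i0 (step P) (0, u0)).1 (size P) = size P by apply/minn_idPr.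
  by apply: SCall; exists i0.
Qed.

Lemma compile_halts c n m : wf c ->
  (halts_with (compile c 0) n m <-> exists t, Sem c (init n) t /\ t 0 = m).
Proof.
move=> w.
have pl : placed (compile c 0) 0 c by move=> i _; rewrite add0n.
have sz : 0 + len c <= size (compile c 0) by rewrite size_compile.
have z : init n Z = 0 by [].
rewrite /halts_with run_iff; split.
- case=> k [h e].
  have [j [t [l [e1 hs]]]] := bwd w pl sz z h.
  exists t; split => //.
  move: h e; rewrite -(subnK l) iterD e1 iter_halted //.
  by rewrite /halted /= size_compile.
- case=> t [hs e].
  have [j e1] := fwd hs w z pl sz.
  exists j; rewrite e1 /halted /= size_compile; split => //.
Qed.

Lemma BHalts_det P s u1 u2 : BHalts P s u1 -> BHalts P s u2 -> u1 = u2.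
Proof.
case=> n1 [h1 <-] [n2 [h2 <-]].
case: (leqP n1 n2) => l.
  by rewrite (halted_mono l h1).
by rewrite (halted_mono (ltnW l) h2).
Qed.

Lemma inv_seq c1 c2 s t : Sem (CSeq c1 c2) s t -> exists u, Sem c1 s u /\ Sem c2 u t.
Proof. by move=> H; inversion H; subst; eauto. Qed.
Lemma inv_if r c1 c2 s t : Sem (CIf r c1 c2) s t ->
  (s r = 0 /\ Sem c1 s t) \/ (s r <> 0 /\ Sem c2 (upd s r (s r).-1) t).
Proof. by move=> H; inversion H; subst; eauto. Qed.
Lemma inv_while r c s t : Sem (CWhile r c) s t ->
  (s r = 0 /\ t = s) \/ (s r <> 0 /\ exists u, Sem c (upd s r (s r).-1) u /\ Sem (CWhile r c) u t).
Proof. by move=> H; inversion H; subst; eauto 6. Qed.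
Lemma inv_call P m k s t : Sem (CCall P m k) s t ->
  exists u, BHalts P (fun i => s (m * i + k)) u /\ t = emb m k s u.
Proof. by move=> H; inversion H; subst; eauto. Qed.

Lemma Sem_det c s t1 t2 : Sem c s t1 -> Sem c s t2 -> t1 = t2.
Proof.
move=> H; elim: H t2 => {c s t1}.
- by move=> r s t2 H; inversion H.
- by move=> r s t2 H; inversion H.
- move=> c1 c2 s u t h1 IH1 h2 IH2 t2 /inv_seq [u' [H1 H2]].
  by apply: IH2; rewrite (IH1 _ H1).
- by move=> r c s hr t2 /inv_while [[_ ->]|[]].
- move=> r c s u t hr hb IHb hw IHw t2 /inv_while [[]//|[_ [u' [H1 H2]]]].
  by apply: IHw; rewrite (IHb _ H1).
- by move=> r c1 c2 s t hr h IH t2 /inv_if [[_ /IH]|[]].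
- by move=> r c1 c2 s t hr h IH t2 /inv_if [[]|[_ /IH]].
- move=> P m k s u hb t2 /inv_call [u' [hb' ->]].
  by rewrite (BHalts_det hb hb').
Qed.



Fixpoint decf f n : seq bool := match f with 0 => [::] | f'.+1 =>
  match n with 0 => [::] | n'.+1 => odd n' :: decf f' n'./2 end end.
Definition dec n := decf n n.

Lemma enc_cons b s : enc (b :: s) = (enc s).*2 + (if b then 2 else 1).
Proof. by []. Qed.

Lemma encK_f f n : n <= f -> enc (decf f n) = n.
Proof.
elim: f n => [|f IH] [|n] //= h.
rewrite IH; last by have := odd_double_half n; lia.
have := odd_double_half n; case: (odd n) => /=; lia.
Qed.
Lemma decK n : enc (dec n) = n.
Proof. exact: encK_f. Qed.

Lemma enc_inj : injective enc.
Proof.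
elim=> [|b s IH] [|b' s'] //=.
- by case: b'; lia.
- by case: b; lia.
move=> e.
have hb : b = b'.
  move: e; case: b; case: b' => //; move/(congr1 odd); rewrite !oddD !odd_double //.
subst b'; congr cons; apply: IH.
by move: e; case: b; lia.
Qed.

Lemma enc0 s : enc s = 0 -> s = [::].
Proof. by case: s => // b s; rewrite enc_cons; case: b; lia. Qed.

Definition tri n := (n * n.+1)./2.
Lemma tri_succ n : tri n.+1 = tri n + n.+1.
Proof.
rewrite /tri (_ : n.+1 * n.+2 = n * n.+1 + (n.+1).*2); last by rewrite -!mul2n; lia.
by rewrite halfD odd_double andbF doubleK.
Qed.
Lemma pairnE a b : pairn a b = tri (a + b) + b.
Proof. by []. Qed.

Definition succf (p : nat * nat) : nat * nat :=
  if p.1 is a'.+1 then (a', p.2.+1) else (p.2.+1, 0).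



Lemma pairn_succ a b : pairn (succf (a, b)).1 (succf (a, b)).2 = (pairn a b).+1.
Proof.
rewrite /succf; case: a => [|a] /=; rewrite !pairnE.
  by rewrite !addn0 !add0n tri_succ; lia.
by rewrite (addnS a b) (addSn a b); lia.
Qed.

Lemma iter_pairn n : forall a b, pairn a b = n -> iter n succf (0, 0) = (a, b).
Proof.
elim: n => [|n IH] a b.
  rewrite pairnE; case: b => [|b]; last by move=> h; exfalso; lia.
  case: a => // a; rewrite !addn0 tri_succ => h; exfalso; lia.
move=> e.
have [a0 [b0 [e1 e2]]] : exists a0 b0, succf (a0, b0) = (a, b) /\ pairn a0 b0 = n.
  case: b e => [|b] e.
    case: a e => [|a] e.
      by move: e; rewrite pairnE.
    exists 0, a; split => //.
    by have := pairn_succ 0 a; rewrite /= e; case.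
  exists a.+1, b; split => //.
  by have := pairn_succ a.+1 b; rewrite /= e; case.
by rewrite iterS (IH _ _ e2) e1.
Qed.


Ltac updsimp := repeat (rewrite upd_eq || (rewrite upd_neq; last by (done || rewrite eq_sym; done))).

Definition Move r d := CWhile r (CInc d).

Lemma Move_spec r d s : r != d -> exists t, Sem (Move r d) s t /\ t r = 0 /\
  t d = s d + s r /\ forall i, i != r -> i != d -> t i = s i.
Proof.
move=> ne; move Hn: (s r) => n; elim: n s Hn => [|n IH] s hs.
  by exists s; split; [apply: SWhile0 | rewrite hs addn0].
set s1 := upd (upd s r n) d (upd s r n d).+1.
have h1 : s1 r = n by rewrite /s1 upd_neq ?upd_eq.
have [t [ht [t1 [t2 t3]]]] := IH s1 h1.
exists t; split.
  apply: SWhileS (ht); first by rewrite hs.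
  by rewrite hs /=; apply: SInc.
split => //; split.
  by rewrite t2 /s1 upd_eq upd_neq 1?eq_sym //; lia.
by move=> i h h'; rewrite t3 // /s1 !upd_neq.
Qed.

Definition Move2 r d1 d2 := CWhile r (CSeq (CInc d1) (CInc d2)).

Lemma Move2_spec r d1 d2 s : r != d1 -> r != d2 -> d1 != d2 ->
  exists t, Sem (Move2 r d1 d2) s t /\ t r = 0 /\
  t d1 = s d1 + s r /\ t d2 = s d2 + s r /\ forall i, i != r -> i != d1 -> i != d2 -> t i = s i.
Proof.
move=> n1 n2 n12; move Hn: (s r) => n; elim: n s Hn => [|n IH] s hs.
  by exists s; split; [apply: SWhile0 | rewrite !addn0].
set s0 := upd s r n.
set s1 := upd s0 d1 (s0 d1).+1.
set s2 := upd s1 d2 (s1 d2).+1.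
have h1 : s2 r = n by rewrite /s2 /s1 /s0; updsimp.
have [t [ht [t1 [t2 [t3 t4]]]]] := IH s2 h1.
exists t; split.
  apply: SWhileS (ht); first by rewrite hs.
  by rewrite hs /=; apply: SSeq; apply: SInc.
split => //; split.
  rewrite t2 /s2 /s1 /s0; updsimp; lia.
split.
  rewrite t3 /s2 /s1 /s0; updsimp; lia.
by move=> i h h' h''; rewrite t4 // /s2 /s1 /s0; updsimp.
Qed.


Definition AddKeep r d tmp := CSeq (Move2 r d tmp) (Move tmp r).

Lemma AddKeep_spec r d tmp s : r != d -> r != tmp -> d != tmp -> s tmp = 0 ->
  exists t, Sem (AddKeep r d tmp) s t /\ t r = s r /\ t d = s d + s r /\ t tmp = 0 /\
  forall i, i != r -> i != d -> i != tmp -> t i = s i.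
Proof.
move=> n1 n2 n3 z.
have [u [hu [u1 [u2 [u3 u4]]]]] := Move2_spec s n1 n2 n3.
have n2' : tmp != r by rewrite eq_sym.
have [t [ht [t1 [t2 t3]]]] := Move_spec u n2'.
exists t; split; first by apply: SSeq hu ht.
split; first by rewrite t2 u1 u3 z.
have nd : d != r by rewrite eq_sym.
split; first by rewrite (t3 d n3 nd) u2.
split => // i h h' h''; rewrite t3 // u4 //.
Qed.

Definition TriL W d T := CWhile W (CSeq (CInc d) (AddKeep W d T)).

Lemma TriL_spec W d T s : W != d -> W != T -> d != T -> s T = 0 ->
  exists t, Sem (TriL W d T) s t /\ t W = 0 /\ t d = s d + tri (s W) /\ t T = 0 /\
  forall i, i != W -> i != d -> i != T -> t i = s i.
Proof.
move=> n1 n2 n3; move Hn: (s W) => n; elim: n s Hn => [|n IH] s hs z.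
  by exists s; split; [apply: SWhile0 | rewrite addn0].
set s0 := upd s W n.
set s1 := upd s0 d (s0 d).+1.
have z1 : s1 T = 0 by rewrite /s1 /s0; updsimp.
have [s2 [h2 [e1 [e2 [e3 e4]]]]] := AddKeep_spec n1 n2 n3 z1.
have hw : s2 W = n by rewrite e1 /s1 /s0; updsimp.
have [t [ht [t1 [t2 [t3 t4]]]]] := IH s2 hw e3.
exists t; split.
  apply: SWhileS (ht); first by rewrite hs.
  by rewrite hs /=; apply: SSeq h2; apply: SInc.
split => //; split.
  rewrite t2 e2 /s1 /s0 tri_succ; updsimp; lia.
split => // i h h' h''; by rewrite t4 // e4 // /s1 /s0; updsimp.
Qed.

Definition Succ := CIf 2 (CSeq (Move 5 2) (CInc 2)) (CInc 5).
Definition Unpair := CWhile 0 Succ.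

Lemma Succ_spec s : exists t, Sem Succ s t /\ (t 2, t 5) = succf (s 2, s 5) /\
  forall i, i != 2 -> i != 5 -> t i = s i.
Proof.
case E: (s 2) => [|a].
  have [u [hu [u1 [u2 u3]]]] := Move_spec s (isT : 5 != 2).
  exists (upd u 2 (u 2).+1); split.
    by apply: SIf0 => //; apply: SSeq hu (SInc _ _).
  split; first by rewrite /succf /= ?E; updsimp; rewrite u1 u2 ?E.
  by move=> i h h'; updsimp; rewrite u3.
exists (upd (upd s 2 a) 5 (upd s 2 a 5).+1); split.
  by apply: SIfS; rewrite ?E //; apply: SInc.
split; first by rewrite /succf /= ?E; updsimp.
by move=> i h h'; updsimp.
Qed.

Lemma Unpair_spec s : exists t, Sem Unpair s t /\ t 0 = 0 /\
  (t 2, t 5) = iter (s 0) succf (s 2, s 5) /\ forall i, i != 0 -> i != 2 -> i != 5 -> t i = s i.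
Proof.
move Hn: (s 0) => n; elim: n s Hn => [|n IH] s hs.
  by exists s; split; [apply: SWhile0 | ].
set s0 := upd s 0 n.
have [s1 [h1 [e1 e2]]] := Succ_spec s0.
have hw : s1 0 = n by rewrite e2 // /s0; updsimp.
have [t [ht [t1 [t2 t3]]]] := IH s1 hw.
exists t; split.
  apply: SWhileS (ht); first by rewrite hs.
  by rewrite hs.
split => //; split.
  by rewrite t2 e1 iterSr /s0; updsimp.
by move=> i h h' h''; rewrite t3 // e2 // /s0; updsimp.
Qed.

Definition PopL x r f := CWhile x (CIf x (CInc f) (CInc r)).

Lemma PopL_spec x r f s : x != r -> x != f -> r != f ->
  exists t, Sem (PopL x r f) s t /\ t x = 0 /\ t r = s r + (s x)./2 /\
  t f = s f + odd (s x) /\ forall i, i != x -> i != r -> i != f -> t i = s i.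
Proof.
move=> n1 n2 n3; move Hn: (s x) => n; elim/ltn_ind: n s Hn => n IH s hs.
case: n IH hs => [|[|m]] IH hs.
- by exists s; split; [apply: SWhile0 | rewrite !addn0].
- set s0 := upd s x 0.
  set s1 := upd s0 f (s0 f).+1.
  exists s1; split.
    apply: SWhileS; first by rewrite hs.
      by rewrite hs; apply: SIf0; [rewrite /s0; updsimp | apply: SInc].
    by apply: SWhile0; rewrite /s1 /s0; updsimp.
  split; first by rewrite /s1 /s0; updsimp.
  split; first by rewrite /s1 /s0; updsimp; rewrite addn0.
  split; first by rewrite /s1 /s0; updsimp; rewrite addn1.
  by move=> i h h' h''; rewrite /s1 /s0; updsimp.
- set s0 := upd s x m.+1.
  set s1 := upd s0 x m.
  set s2 := upd s1 r (s1 r).+1.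
  have hw : s2 x = m by rewrite /s2 /s1 /s0; updsimp.
  have [t [ht [t1 [t2 [t3 t4]]]]] := IH m (ltnW (ltnSn m.+1)) s2 hw.
  exists t; split.
    apply: SWhileS (ht); first by rewrite hs.
    rewrite hs; apply: SIfS; first by rewrite /s0; updsimp.
    by rewrite /s0 upd_eq /=; apply: SInc.
  split => //; split.
    by rewrite t2 /s2 /s1 /s0; updsimp; rewrite /=; lia.
  split.
    by rewrite t3 /s2 /s1 /s0; updsimp; rewrite /= negbK.
  by move=> i h h' h''; rewrite t4 // /s2 /s1 /s0; updsimp.
Qed.

Definition Chk r := CWhile r (CInc r).
Lemma inv_inc r s t : Sem (CInc r) s t -> t = upd s r (s r).+1.
Proof. by move=> H; inversion H. Qed.

Lemma Chk_inv r s t : Sem (Chk r) s t -> s r = 0 /\ t = s.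
Proof.
move=> H; remember (Chk r) as cc eqn:Ec; elim: H Ec => //.
- by move=> r' c0 s0 h; rewrite /Chk => -[e1 e2]; subst.
- move=> r' c0 s0 u t0 h hb _ hw IH; rewrite /Chk => -[e1 e2]; subst.
  have [IH1 _] := IH erefl.
  move: hb IH1 => /inv_inc ->; rewrite upd_eq; lia.
Qed.

Definition Div d := CSeq (CInc d) (Chk d).
Lemma Div_inv d s t : Sem (Div d) s t -> False.
Proof.
by case/inv_seq => u [/inv_inc -> /Chk_inv []]; rewrite upd_eq.
Qed.


Lemma halts_iff P n m : halts_with P n m <-> exists u, BHalts P (init n) u /\ u 0 = m.
Proof.
rewrite /halts_with run_iff; split.
- by case=> k [h e]; exists (iter k (step P) (0, init n)).2; split => //; exists k.
- by case=> u [[k [h e]] <-]; exists k; rewrite e.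
Qed.

Lemma Unpair_init a b : exists t, Sem Unpair (init (pairn a b)) t /\ t 0 = 0 /\
  t 2 = a /\ t 5 = b /\ forall i, i != 0 -> i != 2 -> i != 5 -> t i = 0.
Proof.
have [t [h [t1 [t2 t3]]]] := Unpair_spec (init (pairn a b)).
move: t2; rewrite /init /= (iter_pairn (erefl (pairn a b))) => -[e2 e5].
exists t; do !split => //.
by move=> i h1 h2 h3; rewrite t3 // /init (negbTE h1).
Qed.

Definition M2 := CSeq Unpair (Move 2 0).

Lemma M2_sem a b m : (exists t, Sem M2 (init (pairn a b)) t /\ t 0 = m) <-> m = a.
Proof.
have [u [hu [u0 [u2 [u5 _]]]]] := Unpair_init a b.
have [t [ht [t2 [t0 _]]]] := Move_spec u (isT : 2 != 0).
split.
- case=> t' [/inv_seq [u' [hu' ht']] <-].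
  rewrite (Sem_det hu' hu) in ht'.
  by rewrite (Sem_det ht' ht) t0 u0 u2.
- move=> ->; exists t; split; first by apply: SSeq hu ht.
  by rewrite t0 u0 u2.
Qed.

Definition Pre := CSeq Unpair (Move 2 3).
Lemma Pre_spec a b : exists t, Sem Pre (init (pairn a b)) t /\ t 3 = a /\ t 5 = b /\
  forall i, i != 2 -> i != 3 -> i != 5 -> t i = 0.
Proof.
have [u [hu [u0 [u2 [u5 u6]]]]] := Unpair_init a b.
have [t [ht [t2 [t3 t4]]]] := Move_spec u (isT : 2 != 3).
exists t; split; first by apply: SSeq hu ht.
split; first by rewrite t3 u2 (u6 3).
split; first by rewrite t4.
move=> i h1 h2 h3; rewrite t4 //.
case: (i =P 0) => [->|/eqP h0] //; exact: u6.
Qed.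

Definition Mid := CSeq (Move 3 8) (CSeq (Move2 5 8 4) (TriL 8 4 11)).
Lemma Mid_spec s : s 8 = 0 -> s 4 = 0 -> s 11 = 0 -> exists t, Sem Mid s t /\
  t 4 = pairn (s 3) (s 5) /\ forall i, i != 3 -> i != 8 -> i != 5 -> i != 4 -> i != 11 -> t i = s i.
Proof.
move=> z8 z4 z11.
have [s1 [h1 [a1 [a2 a3]]]] := Move_spec s (isT : 3 != 8).
have [s2 [h2 [b1 [b2 [b3 b4]]]]] := Move2_spec s1 (isT : 5 != 8) (isT : 5 != 4) (isT : 8 != 4).
have z : s2 11 = 0 by rewrite b4 // a3.
have [t [ht [c1 [c2 [c3 c4]]]]] := TriL_spec (isT : 8 != 4) (isT : 8 != 11) (isT : 4 != 11) z.
exists t; split; first by apply: SSeq h1 (SSeq h2 ht).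
split.
  by rewrite c2 b2 b3 a2 z8 (a3 4) // (a3 5) // z4 pairnE !add0n addnC.
move=> i n3 n8 n5 n4 n11; rewrite c4 // b4 // a3 //.
Qed.

Lemma emb_out m k s u j : ~~ ((k <= j) && ((j - k) %% m == 0)) -> emb m k s u j = s j.
Proof. by rewrite /emb => /negbTE ->. Qed.

Lemma mod3_4 i : ~~ ((3 <= 3 * i + 4) && ((3 * i + 4 - 3) %% 3 == 0)).
Proof.
rewrite (_ : 3 * i + 4 - 3 = i * 3 + 1); last by lia.
by rewrite modnMDl andbF.
Qed.

Section M1.
Variables PV PN : seq instr.
Definition M1 := CSeq Pre (CSeq (CCall PV 3 3) (CSeq Mid (CSeq (CCall PN 3 4) (Move 4 0)))).

Lemma M1_sem a b m : (exists t, Sem M1 (init (pairn a b)) t /\ t 0 = m) <->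
  exists u w, BHalts PV (init a) u /\ BHalts PN (init (pairn (u 0) b)) w /\ w 0 = m.
Proof.
have [s2 [h2 [p3 [p5 p0]]]] := Pre_spec a b.
have in1 : (fun i => s2 (3 * i + 3)) = init a.
  apply: functional_extensionality => -[|i]; first by rewrite p3.
  by rewrite p0 //; lia.
have S3 : forall u, let s3 := emb 3 3 s2 u in
  s3 8 = 0 /\ s3 4 = 0 /\ s3 11 = 0 /\ s3 3 = u 0 /\ s3 5 = b /\
      (forall i, s3 (3 * i + 4) = 0) /\ s3 0 = 0.
  move=> u s3.
  split; first by rewrite /s3 emb_out // p0.
  split; first by rewrite /s3 emb_out // p0.
  split; first by rewrite /s3 emb_out // p0.
  split; first by rewrite /s3 (emb_at _ _ _ 0).
  split; first by rewrite /s3 emb_out // p5.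
  split; last by rewrite /s3 emb_out // p0.
  move=> i; rewrite /s3 emb_out ?mod3_4 // p0 //; lia.
have S6 : forall u, exists s6, Sem Mid (emb 3 3 s2 u) s6 /\ s6 0 = 0 /\
    (fun i => s6 (3 * i + 4)) = init (pairn (u 0) b).
  move=> u; have [z8 [z4 [z11 [e3 [e5 [e34 e0]]]]]] := S3 u.
  have [s6 [h6 [q4 q]]] := Mid_spec z8 z4 z11.
  exists s6; split => //; split; first by rewrite q.
  apply: functional_extensionality => -[|i]; first by rewrite /= q4 e3 e5.
  by rewrite q; try lia; rewrite e34.
have S7 : forall s6 w, s6 0 = 0 -> exists t, Sem (Move 4 0) (emb 3 4 s6 w) t /\ t 0 = w 0.
  move=> s6 w z0.
  have [t [ht [t4 [t0 _]]]] := Move_spec (emb 3 4 s6 w) (isT : 4 != 0).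
  exists t; split => //; rewrite t0 (emb_at _ _ _ 0) // emb_out //.
  by rewrite z0.
split.
- case=> t [/inv_seq [s2' [h2' /inv_seq [s3 [/inv_call [u [hu ->] /inv_seq [s6' [h6' /inv_seq [s7 [/inv_call [w [hw ->]] ht]]]]]]]]] <-].
  rewrite (Sem_det h2' h2) in h6' hu *.
  rewrite in1 in hu.
  have [s6 [h6 [z0 in2]]] := S6 u.
  rewrite (Sem_det h6' h6) in hw ht *.
  rewrite in2 in hw.
  have [t' [ht' e]] := S7 s6 w z0.
  exists u, w; split => //; split => //.
  by rewrite (Sem_det ht ht').
- case=> u [w [hu [hw <-]]].
  have [s6 [h6 [z0 in2]]] := S6 u.
  have [t [ht e]] := S7 s6 w z0.
  exists t; split => //.
  apply: SSeq h2 _; apply: (@SSeq _ _ _ (emb 3 3 s2 u)).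
    by apply: SCall; rewrite in1.
  apply: SSeq h6 _; apply: (@SSeq _ _ _ (emb 3 4 s6 w)) ht.
  by apply: SCall; rewrite in2.
Qed.
End M1.


Lemma enc_pred b p : (enc (b :: p)).-1 = b + (enc p).*2.
Proof. rewrite enc_cons; case: b => /=; lia. Qed.

Lemma Pop_step x r f s b p : x != r -> x != f -> r != f ->
  s x = enc (b :: p) -> s r = 0 -> s f = 0 ->
  exists t, Sem (PopL x r f) (upd s x (s x).-1) t /\ t x = 0 /\ t r = enc p /\ t f = b /\
  forall i, i != x -> i != r -> i != f -> t i = s i.
Proof.
move=> n1 n2 n3 hx hr hf.
have [t [ht [t1 [t2 [t3 t4]]]]] := PopL_spec (upd s x (s x).-1) n1 n2 n3.
exists t; split => //; split => //.
rewrite t2 t3 upd_eq hx enc_pred; updsimp.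
rewrite hr hf !add0n half_bit_double oddD odd_double addbF.
split => //; split; first by case: b hx.
by move=> i h h' h''; rewrite t4 //; updsimp.
Qed.

Definition Rest := CIf 5 (Chk 4) (CSeq (CInc 3) (CSeq (Move 4 0) (CInc 2))).
Definition Body := CIf 0 (Div 6) (CSeq (PopL 0 4 5) Rest).
Definition Main3 := CSeq (CInc 2) (CSeq (CWhile 2 Body) (Move 3 0)).

Lemma BodyF s : s 0 = enc [:: false] -> s 4 = 0 -> s 5 = 0 -> s 2 = 0 ->
  exists u, Sem Body s u /\ u 2 = 0 /\ u 0 = 0 /\ u 3 = s 3.
Proof.
move=> h0 h4 h5 h2.
have [t [ht [t0 [t4 [t5 t6]]]]] := Pop_step (isT : 0 != 4) (isT : 0 != 5) (isT : 4 != 5) h0 h4 h5.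
exists t; split.
  apply: SIfS; first by rewrite h0.
  apply: SSeq ht _; apply: SIf0 => //; apply: SWhile0; exact: t4.
by split; [rewrite t6 // h2 | split; [exact: t0 | rewrite t6]].
Qed.

Lemma BodyT s p : s 0 = enc (true :: p) -> s 4 = 0 -> s 5 = 0 -> s 2 = 0 ->
  exists u, Sem Body s u /\ u 2 = 1 /\ u 0 = enc p /\ u 4 = 0 /\ u 5 = 0 /\ u 3 = (s 3).+1.
Proof.
move=> h0 h4 h5 h2.
have [t [ht [t0 [t4 [t5 t6]]]]] := Pop_step (isT : 0 != 4) (isT : 0 != 5) (isT : 4 != 5) h0 h4 h5.
set v0 := upd t 5 (t 5).-1.
set v1 := upd v0 3 (v0 3).+1.
have [v2 [h2' [a4 [a0 a]]]] := Move_spec v1 (isT : 4 != 0).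
exists (upd v2 2 (v2 2).+1); split.
  apply: SIfS; first by rewrite h0 enc_cons addn2.
  apply: SSeq ht _; apply: SIfS; first by rewrite t5.
  apply: SSeq (SInc _ _) _; apply: SSeq h2' (SInc _ _).
updsimp; rewrite a //.
split; first by rewrite /v1 /v0; updsimp; rewrite t6 // h2.
split; first by rewrite a0 /v1 /v0; updsimp; rewrite t0.
split; first done.
split; first by rewrite a // /v1 /v0; updsimp; rewrite t5.
by rewrite a // /v1 /v0; updsimp; rewrite t6.
Qed.

Lemma BodyInv s p u : s 0 = enc p -> s 4 = 0 -> s 5 = 0 -> Sem Body s u ->
  p = [:: false] \/ exists p', p = true :: p'.
Proof.
move=> h0 h4 h5 /inv_if [[e /Div_inv] //|[ne]].
case: p h0 ne => [-> //|b p'] h0 ne.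
case: b h0 => h0; first by right; exists p'.
have [t [ht [t0 [t4 [t5 t6]]]]] := Pop_step (isT : 0 != 4) (isT : 0 != 5) (isT : 4 != 5) h0 h4 h5.
case/inv_seq => t' [ht' hr]; rewrite (Sem_det ht' ht) in hr.
case/inv_if: hr => [[_ /Chk_inv [e _]]|[]]; last by rewrite t5.
by left; move: e; rewrite t4 => /enc0 ->.
Qed.

Lemma Loop3_inv p : forall s t, s 2 = 1 -> s 0 = enc p -> s 4 = 0 -> s 5 = 0 ->
  Sem (CWhile 2 Body) s t -> exists n, p = nseq n true ++ [:: false] /\ t 0 = 0 /\ t 3 = s 3 + n.
Proof.
elim: p => [|b p IH] s t h2 h0 h4 h5 /inv_while [[e _]|[_ [u [hb hw]]]]; try by rewrite h2 in e.
- have := BodyInv (p := [::]) _ _ _ hb.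
  by rewrite /upd /= h0 h4 h5 => /(_ erefl erefl erefl) [|[]].
- have s0 : upd s 2 (s 2).-1 0 = enc (b :: p) by rewrite /upd /= h0.
  have s4 : upd s 2 (s 2).-1 4 = 0 by rewrite /upd /= h4.
  have s5 : upd s 2 (s 2).-1 5 = 0 by rewrite /upd /= h5.
  have s2 : upd s 2 (s 2).-1 2 = 0 by rewrite upd_eq h2.
  have s3 : upd s 2 (s 2).-1 3 = s 3 by rewrite /upd.
  case: (BodyInv s0 s4 s5 hb) => [[eb ep]|[p' [eb ep]]]; subst.
    have [u' [hu' [u2 [u0 u3]]]] := BodyF s0 s4 s5 s2.
    rewrite (Sem_det hb hu') in hw.
    case/inv_while: hw => [[_ ->]|[]] //.
    by exists 0; rewrite u0 u3 s3 addn0.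
  have [u' [hu' [u2 [u0 [u4 [u5 u3]]]]]] := BodyT s0 s4 s5 s2.
  rewrite (Sem_det hb hu') in hw.
  have [n [-> [t0 t3]]] := IH _ _ u2 u0 u4 u5 hw.
  by exists n.+1; split => //; split => //; rewrite t3 u3 s3; lia.
Qed.

Lemma Loop3_run n : forall s, s 2 = 1 -> s 0 = enc (nseq n true ++ [:: false]) -> s 4 = 0 -> s 5 = 0 ->
  exists t, Sem (CWhile 2 Body) s t /\ t 0 = 0 /\ t 3 = s 3 + n.
Proof.
elim: n => [|n IH] s h2 h0 h4 h5.
- have s0 : upd s 2 (s 2).-1 0 = enc [:: false] by rewrite /upd /= h0.
  have s4 : upd s 2 (s 2).-1 4 = 0 by rewrite /upd /= h4.
  have s5 : upd s 2 (s 2).-1 5 = 0 by rewrite /upd /= h5.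
  have s2 : upd s 2 (s 2).-1 2 = 0 by rewrite upd_eq h2.
  have [u [hu [u2 [u0 u3]]]] := BodyF s0 s4 s5 s2.
  exists u; split.
    by apply: SWhileS hu (@SWhile0 _ _ _ u2); rewrite h2.
  by rewrite u0 u3 addn0 /upd.
- have s0 : upd s 2 (s 2).-1 0 = enc (true :: (nseq n true ++ [:: false])) by rewrite /upd /= h0.
  have s4 : upd s 2 (s 2).-1 4 = 0 by rewrite /upd /= h4.
  have s5 : upd s 2 (s 2).-1 5 = 0 by rewrite /upd /= h5.
  have s2 : upd s 2 (s 2).-1 2 = 0 by rewrite upd_eq h2.
  have [u [hu [u2 [u0 [u4 [u5 u3]]]]]] := BodyT s0 s4 s5 s2.
  have [t [ht [t0 t3]]] := IH _ u2 u0 u4 u5.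
  exists t; split.
    by apply: SWhileS hu ht; rewrite h2.
  by split => //; rewrite t3 u3 /upd /=; lia.
Qed.

Definition V3 (p : seq bool) : option (seq bool) :=
  if p == nseq (size p).-1 true ++ [:: false] then Some (dec (size p).-1) else None.

Lemma V3_some p q : V3 p = Some q <-> p = nseq (enc q) true ++ [:: false].
Proof.
rewrite /V3; split.
- case: eqP => // e [<-]; by rewrite decK.
- move=> ->; rewrite size_cat size_nseq addn1 /= eqxx.
  by have -> : dec (enc q) = q by apply: enc_inj; rewrite decK.
Qed.

Lemma Main3_sem p q : (exists t, Sem Main3 (init (enc p)) t /\ t 0 = enc q) <->
  p = nseq (enc q) true ++ [:: false].
Proof.
set s := init (enc p).
set s1 := upd s 2 (s 2).+1.
have h2 : s1 2 = 1 by rewrite /s1 upd_eq.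
have h0 : s1 0 = enc p by rewrite /s1 /upd /=.
have h4 : s1 4 = 0 by rewrite /s1 /upd /=.
have h5 : s1 5 = 0 by rewrite /s1 /upd /=.
have h3 : s1 3 = 0 by rewrite /s1 /upd /=.
split.
- case=> t [/inv_seq [s1' [/inv_inc e /inv_seq [u [hu hm]]]] <-].
  rewrite -/s1 in e; subst s1'.
  have [n [-> [u0 u3]]] := Loop3_inv h2 h0 h4 h5 hu.
  have [t' [ht' [_ [t0 _]]]] := Move_spec u (isT : 3 != 0).
  by rewrite (Sem_det hm ht') t0 u0 u3 h3 !add0n.
- move=> ep.
  have h0' : s1 0 = enc (nseq (enc q) true ++ [:: false]) by rewrite h0 ep.
  have [u [hu [u0 u3]]] := Loop3_run h2 h0' h4 h5.
  have [t' [ht' [_ [t0 _]]]] := Move_spec u (isT : 3 != 0).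
  exists t'; split; first by apply: SSeq (SInc _ _) (SSeq hu ht').
  by rewrite t0 u0 u3 h3.
Qed.


Definition SizeL := CWhile 3 (CSeq (PopL 3 4 6) (CSeq (Move 4 3) (CInc 7))).

Lemma SizeL_spec p : forall s, s 3 = enc p -> s 4 = 0 ->
  exists t, Sem SizeL s t /\ t 7 = s 7 + size p /\ t 0 = s 0 /\ t 5 = s 5.
Proof.
elim: p => [|b p IH] s h3 h4.
  by exists s; split; [apply: SWhile0 | rewrite addn0].
set s0 := upd s 3 (s 3).-1.
have [u [hu [u3 [u4 [u6 uo]]]]] := PopL_spec s0 (isT : 3 != 4) (isT : 3 != 6) (isT : 4 != 6).
have [v [hv [v4 [v3 vo]]]] := Move_spec u (isT : 4 != 3).
set w := upd v 7 (v 7).+1.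
have w3 : w 3 = enc p.
  rewrite /w; updsimp; rewrite v3 u3 u4 /s0; updsimp; rewrite h4 add0n h3 enc_pred.
  by rewrite half_bit_double.
have w4 : w 4 = 0 by rewrite /w; updsimp.
have [t [ht [t7 [t0 t5]]]] := IH w w3 w4.
exists t; split.
  apply: SWhileS (ht); first by rewrite h3 enc_cons; case: (b); lia.
  by apply: SSeq hu (SSeq hv (SInc _ _)).
rewrite t7 t0 t5 /w; updsimp; rewrite !vo // !uo // /s0; updsimp.
by split => //; rewrite /=; lia.
Qed.

Definition CmpL := CWhile 7 (CIf 5 (Div 8) (CInc 9)).

Lemma CmpL_run n : forall s, s 7 = n -> n <= s 5 ->
  exists t, Sem CmpL s t /\ t 5 = s 5 - n /\ t 0 = s 0.
Proof.
elim: n => [|n IH] s h7 le.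
  by exists s; split; [apply: SWhile0 | rewrite subn0].
set s0 := upd s 7 n.
set s1 := upd s0 5 (s0 5).-1.
set s2 := upd s1 9 (s1 9).+1.
have h7' : s2 7 = n by rewrite /s2 /s1 /s0; updsimp.
have le' : n <= s2 5 by rewrite /s2 /s1 /s0; updsimp; lia.
have [t [ht [t5 t0]]] := IH s2 h7' le'.
exists t; split.
  apply: SWhileS (ht); first by rewrite h7.
  rewrite h7 /=; apply: SIfS; first by rewrite /s0; updsimp; lia.
  exact: SInc.
by rewrite t5 t0 /s2 /s1 /s0; updsimp; split => //; lia.
Qed.

Lemma CmpL_inv n : forall s t, s 7 = n -> Sem CmpL s t ->
  n <= s 5 /\ t 5 = s 5 - n /\ t 0 = s 0.
Proof.
elim: n => [|n IH] s t h7 /inv_while [[e ->]|[ne [u [hb hw]]]].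
- by rewrite subn0.
- by rewrite h7 in ne.
- by rewrite h7 in e.
- move: hb; rewrite h7 /= => /inv_if [[_ /Div_inv]//|[ne5 /inv_inc eu]].
  subst u.
  have := IH _ _ _ hw; rewrite /upd /= => /(_ erefl) [l [e5 e0]].
  move: ne5; rewrite /upd /= => ne5; split; first by lia.
  by rewrite e5 e0; split => //; lia.
Qed.

Definition M4 := CSeq Unpair (CSeq (Move2 2 0 3) (CSeq SizeL (CSeq CmpL (Chk 5)))).

Lemma M4_sem p b m : (exists t, Sem M4 (init (pairn (enc p) b)) t /\ t 0 = m) <->
  m = enc p /\ size p = b.
Proof.
have [u [hu [u0 [u2 [u5 u6]]]]] := Unpair_init (enc p) b.
have [v [hv [v2 [v0 [v3 v6]]]]] := Move2_spec u (isT : 2 != 0) (isT : 2 != 3) (isT : 0 != 3).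
have v4 : v 4 = 0 by rewrite v6 // u6.
have v7 : v 7 = 0 by rewrite v6 // u6.
have v5 : v 5 = b by rewrite v6 // u5.
have v3' : v 3 = enc p by rewrite v3 u2 u6.
have v0' : v 0 = enc p by rewrite v0 u0 u2.
have [w [hw [w7 [w0 w5]]]] := SizeL_spec v3' v4.
rewrite v7 add0n in w7; rewrite v0' in w0; rewrite v5 in w5.
split.
- case=> t [/inv_seq [u' [hu' /inv_seq [v' [hv' /inv_seq [w' [hw' /inv_seq [x [hx hc]]]]]]]] <-].
  rewrite (Sem_det hu' hu) in hv'; rewrite (Sem_det hv' hv) in hw'.
  rewrite (Sem_det hw' hw) in hx.
  have [l [x5 x0]] := CmpL_inv w7 hx.
  have [e ->] := Chk_inv hc.
  by split; [rewrite x0 w0 | move: e; rewrite x5 w5; lia].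
- case=> -> eb.
  have [x [hx [x5 x0]]] := CmpL_run w7 (ltac:(lia) : size p <= w 5).
  exists x; split; last by rewrite x0 w0.
  apply: SSeq hu (SSeq hv (SSeq hw (SSeq hx _))).
  by apply: SWhile0; rewrite x5 w5 eb subnn.
Qed.


Fixpoint allstr n : seq (seq bool) :=
  if n is n'.+1 then map (cons false) (allstr n') ++ map (cons true) (allstr n') else [:: [::]].

Fixpoint Wt (s : pred (seq bool)) M : nat :=
  if M is M'.+1 then (Wt s M').*2 + count s (allstr M) else count s (allstr 0).
Fixpoint Ac (s : pred (seq bool)) M : nat :=
  if M is M'.+1 then Ac s M' + count s (allstr M) else count s (allstr 0).

Lemma WtS s M : Wt s M.+1 = (Wt s M).*2 + count s (allstr M.+1).
Proof. by []. Qed.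
Lemma AcS s M : Ac s M.+1 = Ac s M + count s (allstr M.+1).
Proof. by []. Qed.

Definition prefree (s : pred (seq bool)) := forall p p', s p -> s p' -> prefix p p' -> p = p'.

Lemma count_split s n : count s (allstr n.+1) =
  count (fun r => s (false :: r)) (allstr n) + count (fun r => s (true :: r)) (allstr n).
Proof. by rewrite /= count_cat !count_map. Qed.

Lemma W_split s M : ~~ s [::] ->
  Wt s M.+1 = Wt (fun r => s (false :: r)) M + Wt (fun r => s (true :: r)) M.
Proof.
move=> h; elim: M => [|M IH].
  by rewrite /= (negbTE h) /= !addn0.
rewrite WtS IH count_split !WtS doubleD; lia.
Qed.

Lemma count0 (a : pred (seq bool)) l : (forall x, ~~ a x) -> count a l = 0.
Proof. by move=> h; elim: l => //= x l ->; rewrite (negbTE (h x)). Qed.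

Lemma W_root s M : prefree s -> s [::] -> Wt s M = 2 ^ M.
Proof.
move=> pf h; elim: M => [|M IH]; first by rewrite /= h.
have z : forall b, count (fun r => s (b :: r)) (allstr M) = 0.
  move=> b; apply: count0 => x; apply/negP => hx.
  by have := pf _ _ h hx (prefix0s _).
rewrite /= -/(allstr M) count_cat !count_map.
have := z false; have := z true; rewrite /preim.
move=> -> ->; rewrite IH expnS; lia.
Qed.

Lemma prefree_cons s b : prefree s -> prefree (fun r => s (b :: r)).
Proof.
move=> pf p p' h h' hp; have := pf _ _ h h'.
by rewrite /= eqxx /= => /(_ hp) [].
Qed.

Lemma kraft M : forall s, prefree s -> Wt s M <= 2 ^ M.
Proof.
elim: M => [|M IH] s pf.
  by rewrite /=; case: (s [::]).
case h: (s [::]); first by rewrite (W_root _ pf h).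
rewrite W_split ?h // expnS.
have := IH _ (@prefree_cons _ false pf); have := IH _ (@prefree_cons _ true pf); lia.
Qed.

Lemma Ac_le_W s M : Ac s M <= Wt s M.
Proof. by elim: M => //= M IH; rewrite -!/(allstr _); lia. Qed.

Lemma growth s e : (forall n, 2 ^ n <= Ac s (n + e)) ->
  forall k, (Ac s (e + k)).*2 + k * 2 ^ k <= (Wt s (e + k)).*2.
Proof.
move=> H; elim=> [|k IH].
  by rewrite addn0 mul0n addn0 leq_double Ac_le_W.
have hk := H k; rewrite addnC in hk.
rewrite addnS /= -!/(allstr _) expnS.
move: IH hk; set A := Ac s (e + k); set W := Wt s (e + k); set c := count _ _; set X := 2 ^ k.
rewrite -!mul2n; nia.
Qed.

Lemma kraft_contra s e : prefree s -> (forall n, 2 ^ n <= Ac s (n + e)) -> False.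
Proof.
move=> pf H.
set k := (2 * 2 ^ e).+1.
have g := growth H k.
have kr := kraft (e + k) pf.
have : k * 2 ^ k <= (2 * 2 ^ e) * 2 ^ k.
  rewrite -mulnA -expnD; move: g kr; rewrite -!mul2n; lia.
by rewrite leq_pmul2r ?expn_gt0 // ltnn.
Qed.

Lemma mem_map_cons (b c : bool) r (A : seq (seq bool)) : (b :: r \in map (fun i => c :: i) A) = (b == c) && (r \in A).
Proof.
apply/mapP/andP => [[x hx [-> ->]]|[/eqP -> h]]; first by rewrite eqxx.
by exists r.
Qed.
Lemma nil_map_cons c (A : seq (seq bool)) : ([::] \in map (fun i => c :: i) A) = false.
Proof. by apply/mapP => -[]. Qed.

Lemma mem_allstr n r : (r \in allstr n) = (size r == n).
Proof.
elim: n r => [|n IH] [|b r] //=.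
  by rewrite mem_cat !nil_map_cons.
rewrite mem_cat !mem_map_cons IH eqSS; by case: (size r == n); rewrite ?andbF //; move: b => [] .
Qed.

Lemma uniq_allstr n : uniq (allstr n).
Proof.
elim: n => //= n IH.
have inj : forall b : bool, injective (cons b) by move=> b x y [].
rewrite cat_uniq !map_inj_uniq // IH /= andbT.
apply/hasPn => r /mapP [x _ ->]; by rewrite mem_map_cons.
Qed.

Lemma size_allstr n : size (allstr n) = 2 ^ n.
Proof. by elim: n => //= n IH; rewrite size_cat !size_map IH expnS; lia. Qed.

Fixpoint allle M := if M is M'.+1 then allle M' ++ allstr M else allstr 0.
Lemma Ac_count s M : Ac s M = count s (allle M).
Proof. by elim: M => // M IH; rewrite AcS IH /= !count_cat. Qed.
Lemma mem_allle M r : (r \in allle M) = (size r <= M).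
Proof.
elim: M => [|M IH]; first by case: r.
have -> : allle M.+1 = allle M ++ allstr M.+1 by [].
by rewrite mem_cat IH mem_allstr orbC -ltnS -leq_eqVlt.
Qed.

Lemma count_bound (s : pred (seq bool)) M (L : seq (seq bool)) : uniq L ->
  (forall r, r \in L -> s r /\ size r <= M) -> size L <= Ac s M.
Proof.
move=> u h; rewrite Ac_count -size_filter; apply: uniq_leq_size => // r /h [h1 h2].
by rewrite mem_filter h1 mem_allle.
Qed.

Lemma least (P : nat -> Prop) : (exists n, P n) -> exists n, P n /\ forall m, P m -> n <= m.
Proof.
case=> n; elim/ltn_ind: n => n IH hn.
case: (classic (exists m, m < n /\ P m)) => [[m [lt hm]]|nh]; first exact: IH lt hm.
exists n; split => // m hm; rewrite leqNgt; apply/negP => lt; apply: nh; by exists m.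
Qed.

Lemma minP_spec (P : nat -> Prop) : (exists n, P n) -> P (minP P) /\ forall m, P m -> minP P <= m.
Proof. move=> /least ex; exact: (epsilon_spec (inhabits 0) _ ex). Qed.


Lemma comp2_of c (f : seq bool -> seq bool -> option (seq bool)) : wf c ->
  (forall p x y, f p x = Some y <->
     exists t, Sem c (init (pairn (enc p) (enc x))) t /\ t 0 = enc y) -> computable2 f.
Proof. by move=> w H; exists (compile c 0) => p x y; rewrite H compile_halts. Qed.

Lemma comp1_of c (f : seq bool -> option (seq bool)) : wf c ->
  (forall x y, f x = Some y <-> exists t, Sem c (init (enc x)) t /\ t 0 = enc y) -> computable1 f.
Proof. by move=> w H; exists (compile c 0) => x y; rewrite H compile_halts. Qed.

Definition num2 (q y : seq bool) : option (seq bool) := Some q.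
Lemma num2_comp : computable2 num2.
Proof.
apply: (comp2_of (c := M2)) => // p x y; rewrite M2_sem /num2.
split; [by case=> -> | by move/enc_inj => ->].
Qed.

Definition U1 (V : seq bool -> option (seq bool)) (num : seq bool -> seq bool -> option (seq bool))
  (r y : seq bool) := if V r is Some q then num q y else None.

Lemma U1_comp V num : computable1 V -> computable2 num -> computable2 (U1 V num).
Proof.
case=> PV hV [PN hN].
apply: (comp2_of (c := M1 PV PN)) => // p x y; rewrite M1_sem /U1.
split.
- case E: (V p) => [q|] // hq.
  have /halts_iff [u [hu u0]] := (hV p q).1 E.
  have /halts_iff [w [hw w0]] := (hN q x y).1 hq.
  by exists u, w; rewrite u0.
- case=> u [w [hu [hw w0]]].
  have hv : V p = Some (dec (u 0)).
    by apply/hV; apply/halts_iff; exists u; rewrite decK.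
  rewrite hv; apply/hN; apply/halts_iff; exists w; by rewrite decK.
Qed.

Lemma U1_pf V num : prefix_free1 V -> prefix_free2 (U1 V num).
Proof.
move=> pf x p p'; rewrite /U1.
case E: (V p) => [q|] // _; case E': (V p') => [q'|] // _.
by apply: pf; rewrite ?E ?E'.
Qed.

Lemma V3_comp : computable1 V3.
Proof.
apply: (comp1_of (c := Main3)) => // p q.
by rewrite Main3_sem V3_some.
Qed.

Lemma prefix_nseq n n' : prefix (nseq n true ++ [:: false]) (nseq n' true ++ [:: false]) -> n = n'.
Proof.
elim: n n' => [|n IH] [|n'] //=.
move=> h; congr S; apply: IH; exact: h.
Qed.

Lemma V3_pf : prefix_free1 V3.
Proof.
move=> p p'; rewrite /V3.
case: eqP => // e _; case: eqP => // e' _.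
by rewrite e e' => /prefix_nseq ->.
Qed.

Definition U4 (p y : seq bool) : option (seq bool) := if size p == enc y then Some p else None.

Lemma U4_comp : computable2 U4.
Proof.
apply: (comp2_of (c := M4)) => // p x y; rewrite M4_sem /U4.
case: eqP => e; split.
- by case=> <-.
- by case=> /enc_inj ->.
- by move=> h.
- by case=> _ /e.
Qed.

Lemma U4_pf : prefix_free2 U4.
Proof.
move=> x p p'; rewrite /U4.
case: eqP => // e _; case: eqP => // e' _.
rewrite prefixE e -e' take_size => /eqP //.
Qed.


Theorem proposition4 :
  forall (U : seq bool -> seq bool -> option (seq bool))
         (V : seq bool -> option (seq bool))
         (num : seq bool -> seq bool -> option (seq bool)),
    optimal2 U -> optimal1 V -> goedel_numbering num ->
    (exists c, forall x y, KPc U x y <= KPprog V num x y + c) /\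
    (forall d, exists x y, KPc U x y + d < KPprog V num x y).
Proof.
move=> U V num [cU pfU uU] [cV pfV uV] [cN gN].
have [t [_ ht]] := gN _ num2_comp.
have Hprog : forall x y, exists q, num q y = Some x.
  by move=> x y; exists (t x); rewrite ht.
have [c3 h3] := uV _ V3_comp V3_pf.
have Hdesc : forall q, exists r, V r = Some q.
  move=> q; have [p [hp _]] := h3 (nseq (enc q) true ++ [:: false]) q ((V3_some _ _).2 erefl).
  by exists p.
have KPu_spec : forall q, (exists r, size r = KPu V q /\ V r = Some q) /\
    (forall r, V r = Some q -> KPu V q <= size r).
  move=> q; have [r hr] := Hdesc q.
  have [[r' [e1 e2]] hmin] := minP_spec (P := fun n => exists r, size r = n /\ V r = Some q)
    (ex_intro _ (size r) (ex_intro _ r (conj erefl hr))).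
  split; first by exists r'.
  by move=> r2 h; apply: hmin; exists r2.
have KPprog_spec : forall x y, (exists q, num q y = Some x /\ KPu V q = KPprog V num x y) /\
    (forall q, num q y = Some x -> KPprog V num x y <= KPu V q).
  move=> x y; have [q hq] := Hprog x y.
  have [[q' [e1 e2]] hmin] := minP_spec (P := fun n => exists q, num q y = Some x /\ KPu V q = n)
    (ex_intro _ (KPu V q) (ex_intro _ q (conj hq erefl))).
  split; first by exists q'.
  by move=> q2 h; apply: hmin; exists q2.
have KPc_le : forall x y p, U p y = Some x -> KPc U x y <= size p.
  move=> x y p hp.
  have [_ hmin] := minP_spec (P := fun n => exists p, size p = n /\ U p y = Some x)
    (ex_intro _ (size p) (ex_intro _ p (conj erefl hp))).
  by apply: hmin; exists p.
split.
- have [c1 h1] := uU _ (U1_comp cV cN) (@U1_pf V num pfV).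
  exists c1 => x y.
  have [[q [hq eq]] _] := KPprog_spec x y.
  have [[r [er hr]] _] := KPu_spec q.
  have : U1 V num r y = Some x by rewrite /U1 hr.
  move/h1 => [p [hp sp]].
  rewrite -eq -er; exact: leq_trans (KPc_le _ _ _ hp) sp.
- have [c4 h4] := uU _ U4_comp U4_pf.
  move=> d; apply: NNPP => nH.
  have Hle : forall x y, KPprog V num x y <= KPc U x y + d.
    move=> x y; rewrite leqNgt; apply/negP => lt; apply: nH; by exists x, y.
  set e := c4 + d.
  pose s : pred (seq bool) := fun r => V r != None.
  have pf : prefree s.
    by move=> p p' hp hp' hpp; apply: pfV => //; apply/eqP.
  apply: (kraft_contra (e := e) pf) => n.
  pose Q x r := s r /\ size r <= n + e /\ exists q, V r = Some q /\ num q (dec n) = Some x.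
  have Hx : forall x, size x = n -> exists r, Q x r.
    move=> x sx.
    have hu : U4 x (dec n) = Some x by rewrite /U4 decK sx eqxx.
    have [p [hp sp]] := h4 _ _ _ hu.
    have k1 := KPc_le _ _ _ hp.
    have k2 := Hle x (dec n).
    have [[q [hq eq]] _] := KPprog_spec x (dec n).
    have [[r [er hr]] _] := KPu_spec q.
    exists r; split; first by rewrite /s hr.
    split; last by exists q.
    rewrite er eq; rewrite sx in sp; rewrite /e; lia.
  pose f x := epsilon (inhabits [::]) (Q x).
  have fP : forall x, size x = n -> Q x (f x).
    by move=> x sx; apply: epsilon_spec; exact: Hx.
  rewrite -(size_allstr n) -(size_map f).
  apply: count_bound.
    rewrite map_inj_in_uniq ?uniq_allstr //.
    move=> x x' hx hx' ef.
    rewrite mem_allstr in hx; rewrite mem_allstr in hx'.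
    have [_ [_ [q [hq hqx]]]] := fP x (eqP hx).
    have [_ [_ [q' [hq' hqx']]]] := fP x' (eqP hx').
    rewrite ef hq' in hq; case: hq => eqq; subst q'.
    by rewrite hqx' in hqx; case: hqx.
  move=> r /mapP [x hx ->]; rewrite mem_allstr in hx.
  by have [h1 [h2 _]] := fP x (eqP hx).
Qed.
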